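(* Let $1\le p<\infty$ and let $X=\ell_p(\mathbb Z_+)$ (real or complex). Let $\mathbf w=(w_n)_{n\ge1}$ be a bounded sequence of non-zero scalars and let $B_{\mathbf w}$ be the weighted backward shift on $X$. Then $B_{\mathbf w}$ admits a Borel probability measure $m$ on $X$ which is $B_{\mathbf w}$-invariant and different from the Dirac mass $\delta_0$ if and only if $\sum_{n=1}^\infty \frac{1}{|w_1\cdots w_n|^p}<\infty$.
   Context: $(e_n)_{n\ge0}$ is the canonical basis of $\ell_p(\mathbb Z_+)$. The weighted backward shift is defined by $B_{\mathbf w}e_0=0$ and $B_{\mathbf w}e_n=w_ne_{n-1}$ for $n\ge1$. A Borel probability measure $m$ is $B_{\mathbf w}$-invariant if $m(B_{\mathbf w}^{-1}(A))=m(A)$ for every Borel set $A\subseteq X$. *)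

(* Defs.v *)
From HB Require Import structures.
From mathcomp Require Import all_boot all_order all_algebra.
From mathcomp Require Import all_classical all_reals all_analysis.
From mathcomp.real_closed Require Import complex.

Set Implicit Arguments.
Unset Strict Implicit.
Unset Printing Implicit Defensive.

Import Order.TTheory GRing.Theory Num.Theory.
Local Open Scope classical_set_scope.
Local Open Scope ring_scope.

(* The sequence space l_p(Z_+) over a scalar ring K equipped with an   *)
(* absolute value absv : K -> R (instantiated below with K = R and     *)
Section LpSpace.
Variables (R : realType) (K : nzRingType) (absv : K -> R).
Hypothesis absv0 : absv 0 = 0.
Variables (p : R) (hp : 1 <= p).

Definition lp_sum (x : nat -> K) : \bar R :=
  (\sum_(0 <= n <oo) ((absv (x n)) `^ p)%:E)%E.

Definition in_lp (x : nat -> K) : bool := `[< (lp_sum x < +oo)%E >].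

Definition lp_seq := {x : nat -> K | in_lp x}.
(* the type is indexed by the (proof-irrelevant) side conditions so that
   its pointed structure (the zero sequence) can be found by inference *)
Definition lp of absv 0 = 0 & 1 <= p := lp_seq.
HB.instance Definition _ := Choice.copy (lp absv0 hp) lp_seq.


Lemma in_lp0 : in_lp (fun _ => 0).
Proof.
apply/asboolP; rewrite /lp_sum absv0 powR0; last first.
  by apply/eqP => p0; move: hp; rewrite p0 ler10.
by rewrite eseries0 // ltry.
Qed.

Definition lp_zero : lp absv0 hp := exist _ (fun _ => 0) in_lp0.

HB.instance Definition _ := isPointed.Build (lp absv0 hp) lp_zero.

Definition lp_norm (x : nat -> K) : R := (fine (lp_sum x)) `^ p^-1.
Definition lp_dist (x y : lp absv0 hp) : R := lp_norm (fun n => sval x n - sval y n).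

Definition lp_open (A : set (lp absv0 hp)) : Prop :=
  forall x, A x -> exists e : R, 0 < e /\ forall y, lp_dist x y < e -> A y.

Definition lp_borel := g_sigma_algebraType lp_open.

(* the weighted backward shift: (B_w x)_n = w_{n+1} x_{n+1}, so that
   B_w e_0 = 0 and B_w e_n = w_n e_{n-1}.  When the weight sequence is
   bounded the shifted sequence is in l_p; otherwise (never used) the
   default value 0 is returned. *)
Definition bshift (w : nat -> K) (x : lp_borel) : lp_borel :=
  insubd (lp_zero : lp_seq) (fun n => w n.+1 * sval x n.+1).

End LpSpace.

Definition lpR (R : realType) (p : R) (hp : 1 <= p) :=
  @lp_borel R R (@Num.norm R R) (@normr0 R R) p hp.
Definition lpC (R : realType) (p : R) (hp : 1 <= p) :=
  @lp_borel R R[i] (@Normc.normc R) (@Normc.normc0 R) p hp.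

(* Main.v *)
Require Import Defs.
From HB Require Import structures.
From mathcomp Require Import all_boot all_order all_algebra.
From mathcomp Require Import all_classical all_reals all_analysis.
From mathcomp Require Import measurable_realfun.
From mathcomp Require Import lra.
From mathcomp.real_closed Require Import complex.
Import Order.TTheory GRing.Theory Num.Theory.
Local Open Scope classical_set_scope.
Local Open Scope ring_scope.

Section Series.
Variable R : realType.

Lemma nneseries_le_bound (u : nat -> R) m B : (forall n, 0 <= u n) ->
  (forall N, \sum_(m <= n < N) u n <= B) ->
  (\sum_(m <= n <oo) (u n)%:E <= B%:E)%E.
Proof.
move=> u0 hB; apply: lime_le.
  by apply: is_cvg_nneseries => n _ _; rewrite lee_fin.
by apply: nearW => N; rewrite sumEFin lee_fin.
Qed.

Lemma nneseries_term_le (u : nat -> R) m n : (forall n, 0 <= u n) -> (m <= n)%N ->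
  ((u n)%:E <= \sum_(m <= k <oo) (u k)%:E)%E.
Proof.
move=> u0 mn; apply: le_trans (nneseries_lim_ge n.+1 _); last first.
  by move=> k _ _; rewrite lee_fin.
rewrite big_nat_recr //= leeDr // sumEFin lee_fin; exact: sumr_ge0.
Qed.

Lemma nneseries_partial_le (u : nat -> R) m N : (forall n, 0 <= u n) ->
  ((\sum_(m <= k < N) u k)%:E <= \sum_(m <= k <oo) (u k)%:E)%E.
Proof.
move=> u0; rewrite -sumEFin; apply: nneseries_lim_ge => k _ _; by rewrite lee_fin.
Qed.

End Series.
Section Gen.
Variables (R : realType) (K : fieldType) (absv : K -> R).
Hypotheses (absv0 : absv 0 = 0) (absv1 : absv 1 = 1)
  (absv_ge0 : forall x, 0 <= absv x)
  (absvM : forall x y, absv (x * y) = absv x * absv y)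
  (absv_eq0 : forall x, absv x = 0 -> x = 0)
  (absvD : forall x y, absv (x + y) <= absv x + absv y)
  (absvN : forall x, absv (- x) = absv x).
Variables (p : R) (hp : 1 <= p).

Local Notation S := (@lp_sum R K absv p).
Local Notation X := (@lp_borel R K absv absv0 p hp).

Lemma p_gt0 : 0 < p. Proof. exact: lt_le_trans ltr01 hp. Qed.

Lemma lp_sum_ge0 f : (0 <= S f)%E.
Proof. by apply: nneseries_ge0 => n _ _; rewrite lee_fin powR_ge0. Qed.

Lemma in_lpP f : in_lp absv p f <-> (S f < +oo)%E.
Proof. by rewrite /in_lp; split => /asboolP. Qed.

Lemma fin_lp f : in_lp absv p f -> S f = (fine (S f))%:E.
Proof. by move/in_lpP => h; rewrite fineK // ge0_fin_numE // lp_sum_ge0. Qed.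

Lemma term_le f n : in_lp absv p f -> absv (f n) `^ p <= fine (S f).
Proof.
move=> h; rewrite -lee_fin -fin_lp //.
by apply: (@nneseries_term_le _ (fun n => absv (f n) `^ p) 0 n) => // k; exact: powR_ge0.
Qed.

Lemma partial_le f N : in_lp absv p f ->
  \sum_(0 <= n < N) absv (f n) `^ p <= fine (S f).
Proof.
move=> h; rewrite -lee_fin -fin_lp //.
by apply: (@nneseries_partial_le _ (fun n => absv (f n) `^ p) 0 N) => k; exact: powR_ge0.
Qed.

Lemma in_lp_bound f B : (forall N, \sum_(0 <= n < N) absv (f n) `^ p <= B) ->
  in_lp absv p f.
Proof.
move=> hB; apply/in_lpP; apply: le_lt_trans (ltry B).
by apply: nneseries_le_bound => // k; exact: powR_ge0.
Qed.

Lemma pow_diff a b :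
  absv (a - b) `^ p <= 2 `^ p * (absv a `^ p + absv b `^ p).
Proof.
set u := absv a; set v := absv b.
have u0 : 0 <= u by exact: absv_ge0. have v0 : 0 <= v by exact: absv_ge0.
have h1 : absv (a - b) <= 2 * Num.max u v.
  apply: le_trans (absvD _ _) _; rewrite absvN mulr_natl mulr2n.
  by apply: lerD; rewrite ?le_max lexx ?orbT.
apply: le_trans (ge0_ler_powR (ltW p_gt0) _ _ h1) _.
- by rewrite nnegrE.
- by rewrite nnegrE mulr_ge0 // le_max u0.
rewrite powRM // ?le_max ?u0 //; apply: ler_wpM2l; first exact: powR_ge0.
have [_|_] := leP u v; rewrite ?lerDr ?lerDl; exact: powR_ge0.
Qed.

Lemma in_lp_sub x y : in_lp absv p x -> in_lp absv p y ->
  in_lp absv p (fun n => x n - y n).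
Proof.
move=> hx hy; apply: (@in_lp_bound _ (2 `^ p * (fine (S x) + fine (S y)))) => N.
apply: le_trans (ler_sum _ (fun n _ => pow_diff (x n) (y n))) _.
rewrite -mulr_sumr big_split /=; apply: ler_wpM2l; first exact: powR_ge0.
by apply: lerD; apply: partial_le.
Qed.

Lemma coord_le_dist (x y : lp_seq absv p) n :
  absv (sval x n - sval y n) <= (fine (S (fun n => sval x n - sval y n))) `^ p^-1.
Proof.
have hd := in_lp_sub _ _ (svalP x) (svalP y).
have -> : absv (sval x n - sval y n) = (absv (sval x n - sval y n) `^ p) `^ p^-1.
  by rewrite -powRrM mulfV ?gt_eqF ?p_gt0 // powRr1.
apply: ge0_ler_powR; rewrite ?nnegrE ?invr_ge0 ?(ltW p_gt0) ?powR_ge0 //.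
  by rewrite fine_ge0 // lp_sum_ge0.
exact: term_le.
Qed.

Lemma open_coord n t :
  @lp_open R K absv absv0 p hp [set x | t < absv (sval x n)].
Proof.
move=> x /= hx; exists (absv (sval x n) - t); split; first by rewrite subr_gt0.
move=> y hy.
have hxy := coord_le_dist x y n.
have h : absv (sval x n) <= absv (sval y n) + absv (sval x n - sval y n).
  have e : sval x n = sval y n + (sval x n - sval y n) by rewrite addrC subrK.
  by rewrite {1}e; exact: absvD.
move: (le_lt_trans hxy hy) => h2.
have h3 : absv (sval y n) + absv (sval x n - sval y n) <
    absv (sval y n) + (absv (sval x n) - t) by rewrite ltrD2l.
have := le_lt_trans h h3.
rewrite addrA; lra.
Qed.

Lemma mcoord n : measurable_fun [set: X] (fun x : X => absv (sval x n)).
Proof.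
apply: (measurability _ (measurable_realfun.RGenOInfty.measurableE R)).
move=> /= _ [_ [t ->] <-]; rewrite setTI.
apply: sub_sigma_algebra => x /=; rewrite in_itv /= andbT => hx.
have [e [e0 he]] := open_coord n t x hx; exists e; split => // y hy.
by rewrite /= in_itv /= andbT; exact: he.
Qed.

Lemma bshiftE (w : nat -> K) M : (forall n, (1 <= n)%N -> absv (w n) <= M) ->
  forall (x : X) n, sval (@bshift R K absv absv0 p hp w x) n = w n.+1 * sval x n.+1.
Proof.
move=> hM x n.
have M0 : 0 <= M by apply: le_trans (hM 1%N isT).
have hin : in_lp absv p (fun n => w n.+1 * sval x n.+1).
  apply: (@in_lp_bound _ (M `^ p * fine (S (sval x)))) => N.
  apply: le_trans (_ : \sum_(0 <= k < N) M `^ p * absv (sval x k.+1) `^ p <= _).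
    apply: ler_sum => k _; rewrite absvM powRM //; apply: ler_wpM2r; first exact: powR_ge0.
    by apply: ge0_ler_powR; rewrite ?nnegrE ?(ltW p_gt0) //; apply: hM.
  rewrite -mulr_sumr; apply: ler_wpM2l; first exact: powR_ge0.
  apply: le_trans (partial_le (sval x) N.+1 (svalP x)).
  by rewrite big_nat_recl //= lerDr powR_ge0.
by rewrite /bshift /= insubdK.
Qed.

Lemma lp_ext (x y : X) : sval x = sval y -> x = y.
Proof.
move: x y => [a ha] [b hb] /= eab; subst b; congr exist; exact: bool_irrelevance.
Qed.

Lemma absv_gt0 a : a != 0 -> 0 < absv a.
Proof.
move=> a0; rewrite lt_def absv_ge0 andbT; apply/eqP => /absv_eq0 h.
by rewrite h eqxx in a0.
Qed.

Definition W (w : nat -> K) n := \prod_(1 <= k < n.+1) w k.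

Lemma W0 w : W w 0 = 1. Proof. by rewrite /W big_geq. Qed.
Lemma WS w n : W w n.+1 = W w n * w n.+1.
Proof. by rewrite /W big_nat_recr. Qed.

Lemma W_neq0 w : (forall n, (1 <= n)%N -> w n != 0) -> forall n, W w n != 0.
Proof.
move=> hw; elim=> [|n IH]; first by rewrite W0 oner_neq0.
by rewrite WS mulf_neq0 // hw.
Qed.

Lemma powRV' a : 0 < a -> a^-1 `^ p = (a `^ p)^-1.
Proof.
move=> a0; have ap : a `^ p != 0 by rewrite gt_eqF // powR_gt0.
apply: (mulfI ap); rewrite -powRM ?invr_ge0 ?(ltW a0) // mulfV ?gt_eqF //.
by rewrite powR1 mulfV.
Qed.

Lemma absvV a : a != 0 -> absv a^-1 = (absv a)^-1.
Proof.
move=> a0; have h : absv a != 0 by rewrite gt_eqF // absv_gt0.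
apply: (mulfI h); rewrite -absvM mulfV // mulfV //.
Qed.

Lemma fixed_dir (w : nat -> K) M : (forall n, (1 <= n)%N -> w n != 0) ->
  (forall n, (1 <= n)%N -> absv (w n) <= M) ->
  (\sum_(1 <= n <oo) ((absv (W w n) `^ p)^-1)%:E < +oo)%E ->
  exists m : probability X R,
    (forall A, measurable A -> m (@bshift R K absv absv0 p hp w @^-1` A) = m A) /\
    (exists A, measurable A /\ m A <> \d_(@lp_zero R K absv absv0 p hp : X) A).
Proof.
move=> hw hM hs.
set u := fun n => (absv (W w n) `^ p)^-1.
have u0 : forall n, 0 <= u n by move=> n; rewrite invr_ge0 powR_ge0.
have Wp n : 0 < absv (W w n) by apply: absv_gt0; exact: W_neq0.
have hser : (\sum_(1 <= n <oo) (u n)%:E)%E = (fine (\sum_(1 <= n <oo) (u n)%:E)%E)%:E.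
  rewrite fineK // ge0_fin_numE //; apply: nneseries_ge0 => n _ _; by rewrite lee_fin.
have hin : in_lp absv p (fun n => (W w n)^-1).
  apply: (@in_lp_bound _ (1 + fine (\sum_(1 <= n <oo) (u n)%:E)%E)) => N.
  have e n : absv ((W w n)^-1) `^ p = u n by rewrite absvV ?W_neq0 // powRV'.
  under eq_bigr do rewrite e.
  case: N => [|N]; first by rewrite big_geq // addr_ge0 // fine_ge0 // ?nneseries_ge0 // => n _ _; rewrite lee_fin.
  rewrite big_ltn // /u W0 absv1 powR1 invr1 lerD2l -lee_fin -hser.
  exact: nneseries_partial_le.
pose xs : X := @exist _ (fun f => in_lp absv p f) (fun n => (W w n)^-1) hin.
have fix_xs : @bshift R K absv absv0 p hp w xs = xs.
  apply: lp_ext; apply: funext => n; rewrite (bshiftE _ _ hM) /= WS invfM mulrA.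
  by rewrite mulrAC mulfV ?hw // mul1r.
exists \d_xs; split.
  move=> A mA.
  have dE (Y : set X) : (\d_xs : probability X R) Y = ((xs \in Y)%:R)%:E.
    exact: diracE.
  rewrite !dE; congr ((_ : bool)%:R%:E).
  by apply/idP/idP => /set_mem h; apply/mem_set; move: h; rewrite /preimage /= fix_xs.
have mA : measurable [set x : X | 0 < absv (sval x 0)].
  have -> : [set x : X | 0 < absv (sval x 0)] =
    setT `&` (fun x : X => absv (sval x 0)) @^-1` `]0, +oo[.
    by rewrite setTI; apply/seteqP; split => x /=; rewrite in_itv /= andbT.
  exact: (mcoord 0 measurableT _ (measurable_itv `]0, +oo[)).
exists [set x : X | 0 < absv (sval x 0)]; split => //.
have dE (a : X) (Y : set X) : (\d_a : probability X R) Y = ((a \in Y)%:R)%:E.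
  exact: diracE.
rewrite dE diracE.
have -> : (xs \in [set x : X | 0 < absv (sval x 0)]) = true.
  by apply/mem_set; rewrite /= W0 invr1 absv1 ltr01.
have -> : (@lp_zero R K absv absv0 p hp \in [set x : X | 0 < absv (sval x 0)]) = false.
  by apply/negbTE/negP => /set_mem /=; rewrite absv0 ltxx.
by move=> [] /eqP; rewrite oner_eq0.
Qed.

Lemma a_le c P v : 0 <= c -> 0 < P -> 0 <= v -> c < P * v ->
  c `^ p * (P `^ p)^-1 <= v `^ p.
Proof.
move=> c0 P0 v0 h; rewrite mulrC ler_pdivrMl ?powR_gt0 //.
rewrite -powRM ?(ltW P0) //; apply: ge0_ler_powR; rewrite ?nnegrE ?(ltW p_gt0) //.
  by rewrite mulr_ge0 // ltW.
exact: ltW.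
Qed.

Lemma mE (m : probability X R) (Y : set X) : measurable Y -> m Y = (fine (m Y))%:E.
Proof. by move=> mY; rewrite fineK // fin_num_measure. Qed.

Lemma mS : measurable_fun [set: X] ((fun x : X => S (sval x)) : X -> \bar R).
Proof.
apply: (@ge0_emeasurable_sum _ _ _ _ _ xpredT).
  by move=> k x _ _; rewrite lee_fin powR_ge0.
move=> k _; apply/measurable_EFinP.
exact: (measurableT_comp (measurable_powR p) (mcoord k)).
Qed.

Section Main.
Variables (w : nat -> K) (M : R).
Hypotheses (hw : forall n, (1 <= n)%N -> w n != 0)
  (hM : forall n, (1 <= n)%N -> absv (w n) <= M).
Variable m : probability X R.
Hypothesis hinv : forall A, measurable A ->
  m (@bshift R K absv absv0 p hp w @^-1` A) = m A.

Local Notation Bs := (@bshift R K absv absv0 p hp w).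
Local Notation zero := (@lp_zero R K absv absv0 p hp : X).

Definition C c n := [set x : X | c < absv (W w n) * absv (sval x n)].

Lemma Wp n : 0 < absv (W w n).
Proof. by apply: absv_gt0; exact: W_neq0. Qed.

Lemma mC c n : measurable (C c n).
Proof.
have -> : C c n = setT `&` ((fun x : X => absv (W w n)) \* (fun x : X => absv (sval x n)))
    @^-1` `]c, +oo[.
  by rewrite setTI; apply/seteqP; split => x /=; rewrite in_itv /= andbT.
by apply: (measurable_funM (measurable_cst _) (mcoord n)) => //.
Qed.

Lemma preC c n : Bs @^-1` C c n = C c n.+1.
Proof.
by rewrite predeqE => x; rewrite /C /= (bshiftE _ _ hM) absvM mulrA -absvM -WS.
Qed.

Lemma mCn c n : m (C c n) = m (C c 0).
Proof.
elim: n => [//|n IH].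
by rewrite -preC hinv //; exact: mC.
Qed.

Lemma compl0 : ~` [set zero] = \bigcup_n C 0 n.
Proof.
apply/seteqP; split => x /=.
  move=> hx; apply: contrapT => hno; apply: hx; apply: lp_ext; apply: funext => n /=.
  apply: contrapT => /eqP hn; apply: hno; exists n => //.
  by rewrite /C /= mulr_gt0 ?Wp ?absv_gt0.
move=> [n _]; rewrite /C /= => h hx; move: h; by rewrite hx /= absv0 mulr0 ltxx.
Qed.

Lemma mcompl0 : measurable (~` [set zero]).
Proof. rewrite compl0; apply: bigcupT_measurable => n; exact: mC. Qed.

Lemma step1 : (exists A, measurable A /\ m A <> \d_zero A) -> m (~` [set zero]) != 0%E.
Proof.
move=> [A [mA hA]]; apply/eqP => h0; apply: hA.
rewrite diracE.
have mcA : measurable (~` A) by exact: measurableC.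
case: (pselect (A zero)) => hz.
  have -> : (zero \in A) = true by apply/mem_set.
  have hc : m (~` A) = 0%E.
    apply/le_anti; rewrite measure_ge0 andbT -h0; apply: le_measure; rewrite ?inE //.
      exact: mcompl0.
    by move=> x /= hx hx0; apply: hx; rewrite hx0.
  move: (probability_setC m mA); rewrite hc (mE m _ mA) => /eqP.
  by rewrite -EFinB eq_sym eqe subr_eq0 => /eqP <-.
have -> : (zero \in A) = false by apply/negbTE/negP => /set_mem.
rewrite (_ : (false%:R)%:E = 0%E) //.
apply/le_anti; rewrite measure_ge0 andbT -h0; apply: le_measure; rewrite ?inE //.
  exact: mcompl0.
by move=> x hx /= hx0; apply: hz; rewrite -hx0.
Qed.

Lemma sub0 (F : nat -> set X) (Y : set X) : (forall n, measurable (F n)) ->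
  measurable Y -> Y `<=` \bigcup_n F n -> (forall n, m (F n) = 0%E) -> m Y = 0%E.
Proof.
move=> mF mY sub h; apply/le_anti; rewrite measure_ge0 andbT.
have := measure_sigma_subadditive m mF mY sub.
move=> h1; apply: le_trans h1 _.
by rewrite eseries0 // => i _ _; exact: h.
Qed.

Hypothesis hA : exists A, measurable A /\ m A <> \d_zero A.

Lemma step2 : m (C 0 0) != 0%E.
Proof.
apply/eqP => h; move/eqP: (step1 hA); apply.
apply: (sub0 (C 0) (~` [set zero]) (mC 0) mcompl0); first by rewrite compl0.
by move=> n; rewrite mCn.
Qed.

Lemma step3 : exists k : nat, m (C (k.+1%:R^-1) 0) != 0%E.
Proof.
apply: contrapT => hno; move/eqP: step2; apply.
apply: (sub0 (fun k => C (k.+1%:R^-1) 0) (C 0 0)).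
- by move=> k; exact: mC.
- exact: mC.
- move=> x; rewrite /C /= => hx; exists (Num.trunc ((absv (W w 0) * absv (sval x 0))^-1)) => //=.
  rewrite invf_plt ?posrE ?ltr0n //; exact: truncnS_gt.
- move=> k; apply/eqP/negPn/negP => hk; apply: hno; by exists k.
Qed.

Definition G (j : nat) := [set x : X | (S (sval x) <= j%:R%:E)%E].

Lemma mG j : measurable (G j).
Proof. by have := emeasurable_fun_infty_c measurableT mS (j%:R%:E); rewrite setTI. Qed.

Lemma cupG : \bigcup_j G j = setT.
Proof.
apply/seteqP; split => // x _; have hx := svalP x.
exists (Num.trunc (fine (S (sval x)))).+1 => //=.
rewrite /G /= (fin_lp _ hx) lee_fin; exact/ltW/truncnS_gt.
Qed.

Lemma finite_sum : (\sum_(1 <= n <oo) ((absv (W w n) `^ p)^-1)%:E < +oo)%E.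
Proof.
have [k hk] := step3.
set c := k.+1%:R^-1 : R.
have c0 : 0 < c by rewrite invr_gt0 ltr0n.
have mC0 := mC c 0.
set dd := fine (m (C c 0)).
have hdd : m (C c 0) = dd%:E := mE m _ mC0.
have dd0 : 0 < dd.
  rewrite lt_def -lee_fin -hdd measure_ge0 andbT.
  by apply: contra hk => /eqP d0; rewrite hdd d0.
have homoG : {homo G : a b / (a <= b)%N >-> (a <= b)%O}.
  move=> a b ab; rewrite subsetEset => x /=; move/le_trans; apply; by rewrite lee_fin ler_nat.
have hcv := @nondecreasing_cvg_mu _ _ _ m _ mG (bigcupT_measurable _ mG) homoG.
have mT : m setT = 1%E := probability_setT m.
rewrite cupG in hcv.
have {}hcv : (m \o G) x @[x --> \oo] --> 1%E by rewrite -mT; exact: hcv.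
have [j hj] : exists j, ((1 - dd / 2)%:E < m (G j))%E.
  apply: contrapT => hno.
  have hle : forall j, ((m \o G) j <= (1 - dd / 2)%:E)%E.
    by move=> j; rewrite leNgt; apply/negP => h; apply: hno; exists j.
  have h : (lim ((m \o G) x @[x --> \oo]) <= (1 - dd / 2)%:E)%E.
    apply: lime_le; [exact: cvgP hcv | exact: nearW].
  move: h; rewrite (cvg_lim (@ereal_hausdorff R) hcv) lee_fin => h.
  have : dd <= 0 by lra.
  by rewrite leNgt dd0.
set u := fun n => (absv (W w n) `^ p)^-1.
have u0 n : 0 <= u n by rewrite invr_ge0 powR_ge0.
have mCG n : measurable (C c n `&` G j) by apply: measurableI; [exact: mC | exact: mG].
set r := fun n => fine (m (C c n `&` G j)).
have hr n : dd / 2 < r n.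
  have h1 : (m (C c n) <= m (C c n `&` G j) + m (~` G j))%E.
    apply: le_trans (measureU2 _ (mCG n) (measurableC (mG j))).
    apply: le_measure; rewrite ?inE.
    - exact: mC.
    - by apply: measurableU; [exact: mCG | exact: measurableC (mG j)].
    - move=> x hx; case: (pselect (G j x)) => hG; [left | right] => //.
  have hc : m (~` G j) = (1 - fine (m (G j)))%:E.
    rewrite (probability_setC m (mG j)) EFinB; congr (_ + _); apply: (congr1 oppe); exact: mE m _ (mG j).
  rewrite mCn hdd (mE m _ (mCG n)) hc in h1.
  rewrite -EFinD lee_fin in h1.
  rewrite (mE m _ (mG j)) lte_fin in hj.
  rewrite /r; lra.
have hbound N : \sum_(0 <= n < N) (c `^ p * u n) * r n <= j%:R.
  set F := fun n (x : X) => ((c `^ p * u n) * \1_(C c n `&` G j) x)%:E.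
  have F0 n x : (0 <= F n x)%E.
    by rewrite /F lee_fin mulr_ge0 ?mulr_ge0 ?powR_ge0 // indicE; case: (_ \in _).
  have mF n : measurable_fun setT (F n).
    apply/measurable_EFinP; apply: measurable_funM; first exact: measurable_cst.
    exact: measurable_indic (mCG n).
  have I1 : (\int[m]_x (\sum_(0 <= n < N) F n x) =
      \sum_(0 <= n < N) ((c `^ p * u n) * r n)%:E)%E.
    rewrite ge0_integral_sum //; apply: eq_bigr => n _.
    rewrite /F; under eq_integral do rewrite EFinM.
    rewrite ge0_integralZl_EFin //.
    - rewrite integral_indic // setIT [in RHS]EFinM; apply: (congr1 (mule _)); exact: mE m _ (mCG n).
    - apply/measurable_EFinP. exact: measurable_indic (mCG n).
    - by rewrite mulr_ge0 ?powR_ge0.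
  have I2 : (\int[m]_x (\sum_(0 <= n < N) F n x) <= \int[m]_x (cst (j%:R%:E) x))%E.
    apply: ge0_le_integral => //.
    - by move=> x _; apply: sume_ge0 => n _.
    - by apply: emeasurable_sum => n; exact: mF.
    move=> x _; rewrite /F sumEFin lee_fin /=.
    case: (pselect (G j x)) => hG.
    + apply: le_trans (_ : \sum_(0 <= n < N) absv (sval x n) `^ p <= _).
        apply: ler_sum => n _; rewrite indicE.
        case: (pselect ((C c n `&` G j) x)) => hx.
          rewrite mem_set // mulr1.
          exact: (a_le _ _ _ (ltW c0) (Wp n) (absv_ge0 _) hx.1).
        by rewrite memNset // mulr0; exact: powR_ge0.
      apply: le_trans (partial_le (sval x) N (svalP x)) _.
      by move: hG; rewrite /G /= (fin_lp _ (svalP x)) lee_fin.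
    + rewrite big1 // => n _; rewrite indicE memNset ?mulr0 //; by move=> [].
  have hI : (\int[m]_x cst (j%:R%:E) x = j%:R%:E)%E.
    rewrite integral_cst // -[X in _ = X]mule1; apply: (congr1 (mule _)); exact: mT.
  by move: I2; rewrite I1 hI sumEFin lee_fin.
apply: le_lt_trans (ltry (j%:R / (c `^ p * (dd / 2)))).
have K0 : 0 < c `^ p * (dd / 2) by rewrite mulr_gt0 ?powR_gt0 ?divr_gt0.
apply: nneseries_le_bound => // N.
have hN : \sum_(0 <= n < N) u n <= j%:R / (c `^ p * (dd / 2)).
  rewrite ler_pdivlMr // mulr_suml; apply: le_trans (hbound N).
  apply: ler_sum => n _.
  rewrite (_ : u n * (c `^ p * (dd / 2)) = (c `^ p * u n) * (dd / 2)); last first.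
    by rewrite mulrA [u n * _]mulrC.
  by apply: ler_wpM2l; [rewrite mulr_ge0 ?powR_ge0 | exact: ltW].
apply: le_trans hN; case: N => [|N]; first by rewrite !big_geq.
by rewrite [X in _ <= X]big_ltn // lerDr.
Qed.

End Main.

End Gen.

Theorem proposition2p1 (R : realType) (p : R) (hp : 1 <= p) :
  (* real scalars *)
  (forall w : nat -> R,
     (forall n, (1 <= n)%N -> w n != 0) ->
     (exists M : R, forall n, (1 <= n)%N -> `|w n| <= M) ->
     ((exists m : probability (lpR hp) R,
         (forall A, measurable A -> m (bshift w @^-1` A) = m A) /\
         (exists A, measurable A /\ m A <> \d_(lp_zero (@normr0 R R) hp : lpR hp) A))
      <->
      (\sum_(1 <= n <oo) ((`|\prod_(1 <= k < n.+1) w k| `^ p)^-1)%:E < +oo)%E))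
  /\
  (* complex scalars *)
  (forall w : nat -> R[i],
     (forall n, (1 <= n)%N -> w n != 0) ->
     (exists M : R, forall n, (1 <= n)%N -> Normc.normc (w n) <= M) ->
     ((exists m : probability (lpC hp) R,
         (forall A, measurable A -> m (bshift w @^-1` A) = m A) /\
         (exists A, measurable A /\ m A <> \d_(lp_zero (@Normc.normc0 R) hp : lpC hp) A))
      <->
      (\sum_(1 <= n <oo)
          ((Normc.normc (\prod_(1 <= k < n.+1) w k) `^ p)^-1)%:E < +oo)%E)).
Proof.
have nge0 (x : R[i]) : 0 <= Normc.normc x by case: x => a b; exact: sqrtr_ge0.
split.
- move=> w hw [M hM]; split.
  + move=> [m [hinv hA]].
    exact: (@finite_sum R R (@Num.norm R R) (@normr0 R R) (@normr_ge0 R R)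
      (@normrM R) (@normr0_eq0 R R) (@ler_normD R R) (@normrN R R) p hp w M hw hM m hinv hA).
  + move=> hs.
    have h := (@fixed_dir R R (@Num.norm R R) (@normr0 R R) (@normr1 R) (@normr_ge0 R R)
      (@normrM R) (@normr0_eq0 R R) (@ler_normD R R) (@normrN R R) p hp w M hw hM hs).
    exact: h.
- move=> w hw [M hM]; split.
  + move=> [m [hinv hA]].
    exact: (@finite_sum R R[i] (@Normc.normc R) (@Normc.normc0 R) nge0
      (@Normc.normcM R) (@Normc.eq0_normc R) (@le_normcD R) (@normcN R) p hp w M hw hM m hinv hA).
  + move=> hs.
    exact: (@fixed_dir R R[i] (@Normc.normc R) (@Normc.normc0 R) (@Normc.normc1 R) nge0
      (@Normc.normcM R) (@Normc.eq0_normc R) (@le_normcD R) (@normcN R) p hp w M hw hM hs).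
Qed.
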